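(* Let $(a,b,c)$ be a Markov triple, let $m_1,m_2$ be positive integers with $a^2m_1+b^2m_2=c^2$, and let $l_2=(m_2+1)/a$ (a positive integer). Put $\mathbf{u}_1=(b^2,-m_1)$, $\mathbf{u}_2=-(a^2,m_2)$, $\mathbf{u}_3=(0,1)$ and $\mathbf{w}_1=-(a,l_2)$. Let $\Delta\subset\mathbb{R}^2$ be the triangle with vertices $V_0$, $V_1=V_0+a^2\mathbf{u}_1$, $V_2=V_1+b^2\mathbf{u}_2$ (so that $V_0=V_2+c^2\mathbf{u}_3$). Let $\ell$ be the line through $V_2$ in direction $\mathbf{w}_1$, let $Q$ be the point where $\ell$ meets the edge $[V_0,V_1]$, and let $M$ be the affine map of $\mathbb{R}^2$ fixing $\ell$ pointwise with linear part $v\mapsto v+\det(\mathbf{w}_1,v)\,\mathbf{w}_1$. Let $\Delta'=\mathrm{conv}(V_0,Q,V_2)\cup M(\mathrm{conv}(Q,V_1,V_2))$ be the base diagram obtained from $\Delta$ by transferring the cut (the cut being the segment of $\ell$ from the node to $V_2$) to its left. Then $\Delta'$ is a triangle whose three edges have affine lengths $\lambda c^2$, $\lambda b^2$, $\lambda a'^2$ for some $\lambda>0$, where $a'=3bc-a$.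
   Context: A Markov triple is a triple of positive integers $(a,b,c)$ with $a^2+b^2+c^2=3abc$. A vector $v\in\mathbb{Z}^2$ is primitive if it is not a positive integer multiple of another lattice vector; a vector $w=\lambda v$ with $v$ primitive and $\lambda\geq0$ has affine length $\lambda$, and the affine length of a segment with rational slope is the affine length of its displacement vector. The triangle $\Delta$ (with a nodal fiber on $\ell$ near each vertex and a cut from the node to the vertex) is the base diagram of an almost toric fibration of $\mathbb{CP}^2$ obtained from $\mathbb{CP}(a^2,b^2,c^2)$ by rational blowdowns at its three orbifold points; $M$ is the monodromy across the cut at $V_2$, and it sends $\mathbf{u}_2$ to $\mathbf{u}_3$. Transferring the cut produces another base diagram $\Delta'$ of the same almost toric fibration, with the cut now running from the node to $Q$. *)

(* Defs.v *)
From Stdlib Require Import Reals ZArith.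
Open Scope R_scope.

Definition pt := (R * R)%type.

Definition padd (p q : pt) : pt := (fst p + fst q, snd p + snd q).
Definition psub (p q : pt) : pt := (fst p - fst q, snd p - snd q).
Definition pscale (t : R) (p : pt) : pt := (t * fst p, t * snd p).
Definition det2 (v w : pt) : R := fst v * snd w - snd v * fst w.
Definition zpt (x y : Z) : pt := (IZR x, IZR y).

Definition markov_triple (a b c : Z) : Prop :=
  (0 < a)%Z /\ (0 < b)%Z /\ (0 < c)%Z /\ (a*a + b*b + c*c = 3*a*b*c)%Z.

Definition primitive (v1 v2 : Z) : Prop :=
  (v1 <> 0%Z \/ v2 <> 0%Z) /\ forall (k w1 w2 : Z), (0 < k)%Z -> v1 = (k * w1)%Z -> v2 = (k * w2)%Z ->
    (w1 <> v1 \/ w2 <> v2) -> False.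

Definition has_affine_length (d : pt) (L : R) : Prop :=
  exists v1 v2 : Z, primitive v1 v2 /\ 0 <= L /\ d = pscale L (zpt v1 v2).

Definition segment (p q : pt) (x : pt) : Prop :=
  exists t, 0 <= t <= 1 /\ x = padd p (pscale t (psub q p)).

Definition conv3 (p q r : pt) (x : pt) : Prop :=
  exists s t u, 0 <= s /\ 0 <= t /\ 0 <= u /\ s + t + u = 1 /\
    x = padd (pscale s p) (padd (pscale t q) (pscale u r)).

Definition noncollinear (p q r : pt) : Prop := det2 (psub q p) (psub r p) <> 0.

(* Main.v *)
Require Import Defs.
From Stdlib Require Import Reals ZArith.
Open Scope R_scope.
From Stdlib Require Import Lia Lra Psatz.
From Stdlib Require Znumtheory Zwf.

Module NTM.
Import Znumtheory Zwf.
Local Open Scope Z_scope.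


Lemma prime_divisor_exists : forall n, 1 < n -> exists p, prime p /\ (p | n).
Proof.
  intro n. pattern n. apply (well_founded_induction (Zwf_well_founded 0)).
  intros x IH Hx. destruct (prime_dec x) as [Hp|Hp].
  - exists x. split; auto. apply Z.divide_refl.
  - destruct (not_prime_divide x Hx Hp) as [m [Hm Hmx]].
    destruct (IH m) as [p [Pp Pd]]. unfold Zwf; lia. lia.
    exists p. split; auto. eapply Z.divide_trans; eauto.
Qed.

Lemma noprime_rel : forall x y, x <> 0 ->
  (forall p, prime p -> (p | x) -> (p | y) -> False) -> rel_prime x y.
Proof.
  intros x y Hx H. constructor; try apply Z.divide_1_l.
  intros d Hdx Hdy.
  destruct (Z.eq_dec (Z.abs d) 1) as [E|E].
  - apply Z.divide_abs_l. rewrite E. apply Z.divide_refl.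
  - destruct (Z.eq_dec d 0) as [E0|E0].
    + subst. apply Z.divide_0_l in Hdx. lia.
    + destruct (prime_divisor_exists (Z.abs d)) as [p [Pp Pd]]. lia.
      exfalso. apply (H p Pp); apply Z.divide_trans with (Z.abs d); auto;
      apply Z.divide_abs_l; auto.
Qed.

Lemma rel_primitive : forall v1 v2, (v1 <> 0 \/ v2 <> 0) -> rel_prime v1 v2 -> Defs.primitive v1 v2.
Proof.
  intros v1 v2 Hnz Hr. split; auto.
  intros k w1 w2 Hk E1 E2 Hne.
  destruct Hr as [_ _ Hr].
  assert (Hk1 : (k | 1)). { apply Hr; [exists w1 | exists w2]; lia. }
  apply Z.divide_pos_le in Hk1; try lia.
  assert (k = 1) by lia. subst. lia.
Qed.

Lemma markov_perm1 : forall a b c, markov_triple a b c -> markov_triple b a c.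
Proof. unfold markov_triple; intros; lia. Qed.
Lemma markov_perm2 : forall a b c, markov_triple a b c -> markov_triple a c b.
Proof. unfold markov_triple; intros; lia. Qed.


Lemma markov_step : forall a b c, markov_triple a b c -> a <= b <= c ->
  (forall a' b' c', markov_triple a' b' c' -> a'+b'+c' < a+b+c ->
     forall d, (d | a') -> (d | b') -> (d | c') -> (d | 1)) ->
  forall d, (d | a) -> (d | b) -> (d | c) -> (d | 1).
Proof.
  intros a b c [Ha [Hb [Hc E]]] [Hab Hbc] IH d Da Db Dc.
  destruct (Z.eq_dec b c) as [Ebc|Ebc].
  - subst c.
    assert (E2 : b*b*(3*a-2) = a*a) by lia.
    assert (a*a <= b*b) by nia.
    assert (3*a-2 <= 1) by nia.
    assert (a = 1) by lia. subst a.
    assert (b*b = 1) by lia. assert (b = 1) by nia. subst b. auto.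
  - set (c' := 3*a*b - c).
    assert (Ecc : c*c' = a*a+b*b) by (unfold c'; lia).
    assert (Hc' : 0 < c') by nia.
    assert (Hle : (b - c)*(b - c') <= 0).
    { assert (H1 : (b-c)*(b-c') = b*b - b*(c+c') + c*c') by ring.
      rewrite H1, Ecc. unfold c' at 1. nia. }
    assert (c' <= b) by nia.
    apply (IH a b c').
    + unfold markov_triple.
      assert (H2 : a*a+b*b+c'*c' - 3*a*b*c' = c'*(c' - 3*a*b) + a*a+b*b) by ring.
      assert (H3 : c' - 3*a*b = - c) by (unfold c'; ring).
      rewrite H3 in H2. repeat split; lia.
    + lia.
    + auto.
    + auto.
    + unfold c'. apply Z.divide_sub_r; auto. apply Z.divide_mul_r; auto.
Qed.

Lemma markov_desc : forall n a b c, markov_triple a b c ->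
  (Z.to_nat (a+b+c) <= n)%nat ->
  forall d, (d | a) -> (d | b) -> (d | c) -> (d | 1).
Proof.
  induction n; intros a b c H Hn d Da Db Dc.
  - destruct H as [? [? [? ?]]]. lia.
  - assert (IH : forall a' b' c', markov_triple a' b' c' -> a'+b'+c' < a+b+c ->
     forall d, (d | a') -> (d | b') -> (d | c') -> (d | 1)).
    { intros a' b' c' H' Hlt. apply (IHn a' b' c' H').
      destruct H as [? [? [? ?]]]. destruct H' as [? [? [? ?]]]. lia. }
    pose proof H as H0. destruct H0 as [Ha [Hb [Hc E]]].
    assert (P1 : forall x y z, markov_triple x y z -> markov_triple y x z) by
      (unfold markov_triple; intros; lia).
    assert (P2 : forall x y z, markov_triple x y z -> markov_triple x z y) by
      (unfold markov_triple; intros; lia).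
    destruct (Z.le_ge_cases a b); destruct (Z.le_ge_cases b c);
    destruct (Z.le_ge_cases a c).
    all: first [ solve [apply (markov_step a b c); [ unfold markov_triple in *; lia | lia | intros ? ? ? Hm Hl; apply (IH _ _ _ Hm); lia | auto | auto | auto ]] | solve [apply (markov_step a c b); [ unfold markov_triple in *; lia | lia | intros ? ? ? Hm Hl; apply (IH _ _ _ Hm); lia | auto | auto | auto ]] | solve [apply (markov_step b a c); [ unfold markov_triple in *; lia | lia | intros ? ? ? Hm Hl; apply (IH _ _ _ Hm); lia | auto | auto | auto ]] | solve [apply (markov_step b c a); [ unfold markov_triple in *; lia | lia | intros ? ? ? Hm Hl; apply (IH _ _ _ Hm); lia | auto | auto | auto ]] | solve [apply (markov_step c a b); [ unfold markov_triple in *; lia | lia | intros ? ? ? Hm Hl; apply (IH _ _ _ Hm); lia | auto | auto | auto ]] | solve [apply (markov_step c b a); [ unfold markov_triple in *; lia | lia | intros ? ? ? Hm Hl; apply (IH _ _ _ Hm); lia | auto | auto | auto ]] ].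
Qed.


Lemma markov_cop : forall a b c, markov_triple a b c ->
  (forall p, prime p -> (p | a) -> (p | b) -> False) /\
  (forall p, prime p -> (p | b) -> (p | c) -> False).
Proof.
  intros a b c H. pose proof H as [Ha [Hb [Hc E]]].
  assert (D : forall p, prime p -> (p | a) -> (p | b) -> (p | c) -> False).
  { intros p Pp Da Db Dc. pose proof (markov_desc _ a b c H (le_n _) p Da Db Dc) as D1.
    apply Z.divide_pos_le in D1; try lia. pose proof (prime_ge_2 p Pp). lia. }
  split.
  - intros p Pp Da Db. apply (D p Pp Da Db).
    assert (Hcc : (p | c*c)).
    { replace (c*c) with (3*a*b*c - a*a - b*b) by lia.
      apply Z.divide_sub_r; [apply Z.divide_sub_r|].
      - apply Z.divide_mul_l, Z.divide_mul_l, Z.divide_mul_r; auto.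
      - apply Z.divide_mul_l; auto.
      - apply Z.divide_mul_l; auto. }
    destruct (prime_mult p Pp c c Hcc); auto.
  - intros p Pp Db Dc. apply (D p Pp); auto.
    assert (Haa : (p | a*a)).
    { replace (a*a) with (3*a*b*c - b*b - c*c) by lia.
      apply Z.divide_sub_r; [apply Z.divide_sub_r|].
      - apply Z.divide_mul_l, Z.divide_mul_r; auto.
      - apply Z.divide_mul_l; auto.
      - apply Z.divide_mul_l; auto. }
    destruct (prime_mult p Pp a a Haa); auto.
Qed.

Lemma nt_facts : forall a b c m1 m2, markov_triple a b c -> 0 < m1 -> 0 < m2 ->
  a*a*m1 + b*b*m2 = c*c ->
  m2 + 1 = a * ((m2+1)/a) /\
  exists K, (3*b*c-a)*(3*b*c-a) - c*c*m1 = K*(b*b) /\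
    a*a*K = c*c*m2+b*b+2*c*c /\
    Defs.primitive (b*b) (-m1) /\ Defs.primitive (-(c*c)) (-K).
Proof.
  intros a b c m1 m2 H Hm1 Hm2 Hmm.
  pose proof H as [Ha [Hb [Hc E]]].
  destruct (markov_cop a b c H) as [Cab Cbc].
  assert (Rab : rel_prime a (b*b)).
  { apply noprime_rel; try lia. intros p Pp Da Db.
    destruct (prime_mult p Pp b b Db); eauto. }
  assert (Rba : rel_prime (b*b) (a*a)).
  { apply noprime_rel; try lia. intros p Pp Db Da.
    destruct (prime_mult p Pp b b Db); destruct (prime_mult p Pp a a Da); eauto. }
  split.
  - assert (Hd : (a | m2+1)).
    { apply (Gauss a (b*b)); auto.
      exists (3*b*c - a - a*m1). lia. }
    destruct Hd as [k Hk]. rewrite Hk, Z.div_mul by lia. ring.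
  - set (a' := 3*b*c - a).
    assert (Eaa : a*a' = b*b + c*c) by (unfold a'; lia).
    assert (Id : (a*a)*(a'*a' - c*c*m1) = (b*b)*(c*c*m2 + b*b + 2*c*c)).
    { replace ((a*a)*(a'*a' - c*c*m1)) with ((a*a')*(a*a') - c*c*(a*a*m1)) by ring.
      rewrite Eaa. replace (a*a*m1) with (c*c - b*b*m2) by lia. ring. }
    assert (HK : (b*b | a'*a' - c*c*m1)).
    { apply (Gauss (b*b) (a*a)); auto. rewrite Id. apply Z.divide_mul_l, Z.divide_refl. }
    destruct HK as [K HK]. exists K.
    assert (HK2 : a*a*K = c*c*m2 + b*b + 2*c*c).
    { apply (Z.mul_reg_l _ _ (b*b)); try lia. rewrite <- Id, HK. ring. }
    split; [exact HK|]. split; [exact HK2|]. split.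
    + apply rel_primitive; [lia|]. apply noprime_rel; try lia.
      intros p Pp Db Dm. rewrite Z.divide_opp_r in Dm.
      assert (Db' : (p | b)) by (destruct (prime_mult p Pp b b Db); auto).
      apply (Cbc p Pp Db').
      assert (Hcc : (p | c*c)).
      { rewrite <- Hmm. apply Z.divide_add_r.
        - apply Z.divide_mul_r; auto.
        - apply Z.divide_mul_l, Z.divide_mul_l; auto. }
      destruct (prime_mult p Pp c c Hcc); auto.
    + apply rel_primitive; [lia|]. apply noprime_rel; try lia.
      intros p Pp Dc Dk. rewrite Z.divide_opp_r in Dk. rewrite Z.divide_opp_r in Dc.
      assert (Dc' : (p | c)) by (destruct (prime_mult p Pp c c Dc); auto).
      apply (Cbc p Pp); auto.
      assert (Hbb : (p | b*b)).
      { replace (b*b) with (a*a*K - c*c*m2 - 2*c*c) by lia.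
        apply Z.divide_sub_r; [apply Z.divide_sub_r|].
        - apply Z.divide_mul_r; auto.
        - apply Z.divide_mul_l, Z.divide_mul_l; auto.
        - apply Z.divide_mul_l, Z.divide_mul_r; auto. }
      destruct (prime_mult p Pp b b Hbb); auto.
Qed.
Lemma prim01 : Defs.primitive 0 1.
Proof. apply rel_primitive; [lia|]. apply rel_prime_sym, rel_prime_1. Qed.
End NTM.
Import NTM.
Open Scope R_scope.


Lemma M_formula : forall (w O : pt) (M : pt -> pt),
  (forall p q : pt, psub (M p) (M q) = padd (psub p q) (pscale (det2 w (psub p q)) w)) ->
  (forall t : R, M (padd O (pscale t w)) = padd O (pscale t w)) ->
  forall p, M p = padd p (pscale (det2 w (psub p O)) w).
Proof.
  intros w O M H1 H2 p.
  assert (HO : M O = O).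
  { specialize (H2 0). replace (padd O (pscale 0 w)) with O in H2; auto.
    destruct O; unfold padd, pscale; simpl; f_equal; ring. }
  pose proof (H1 p O) as E. rewrite HO in E.
  destruct (M p) as [mx my]. destruct p as [px py], O as [ox oy], w as [wx wy].
  unfold psub, padd, pscale, det2 in *; simpl in *.
  injection E; intros E1 E2. f_equal; lra.
Qed.

Lemma affine_image : forall (w O P R : pt) (M : pt -> pt),
  (forall p, M p = padd p (pscale (det2 w (psub p O)) w)) ->
  det2 w (psub P O) = 0 ->
  forall s t u, s + t + u = 1 ->
  M (padd (pscale s P) (padd (pscale t R) (pscale u O))) =
  padd (pscale s P) (padd (pscale t (M R)) (pscale u O)).
Proof.
  intros w O P R M HM HP s t u Hs.
  rewrite !HM.
  destruct w as [wx wy], O as [ox oy], P as [px py], R as [rx ry].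
  unfold psub, padd, pscale, det2 in *; simpl in *.
  replace u with (1 - s - t) by lra.
  f_equal; apply Rminus_diag_uniq.
  - transitivity (s*wx*(wx*(py-oy)-wy*(px-ox))); [ring | rewrite HP; ring].
  - transitivity (s*wy*(wx*(py-oy)-wy*(px-ox))); [ring | rewrite HP; ring].
Qed.

Lemma M_part : forall (w O P R : pt) (M : pt -> pt),
  (forall p, M p = padd p (pscale (det2 w (psub p O)) w)) ->
  det2 w (psub P O) = 0 ->
  forall x, (exists y, conv3 P R O y /\ x = M y) <-> conv3 P (M R) O x.
Proof.
  intros w O P R M HM HP x. split.
  - intros [y [[s [t [u [Hs [Ht [Hu [Hsum Hy]]]]]]] Hx]]. subst.
    exists s, t, u. repeat split; auto. apply (affine_image w); auto.
  - intros [s [t [u [Hs [Ht [Hu [Hsum Hy]]]]]]].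
    exists (padd (pscale s P) (padd (pscale t R) (pscale u O))). split.
    + exists s, t, u. repeat split; auto.
    + rewrite Hy. symmetry. apply (affine_image w); auto.
Qed.

Lemma union_tri : forall (P Q Rp O : pt) (be : R),
  0 < be < 1 -> O = padd (pscale (1 - be) P) (pscale be Rp) ->
  forall x, (conv3 P Q O x \/ conv3 Q Rp O x) <-> conv3 P Q Rp x.
Proof.
  intros P Q Rp O be Hbe HO x. subst O.
  destruct P as [px py], Q as [qx qy], Rp as [rx ry], x as [xx xy].
  unfold conv3, padd, pscale; simpl. split.
  - intros [[s [t [u [Hs [Ht [Hu [Hsum Hy]]]]]]] | [s [t [u [Hs [Ht [Hu [Hsum Hy]]]]]]]];
      injection Hy; intros E1 E2.
    + exists (s + u*(1-be)), t, (u*be). repeat split; try nra.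
      f_equal; nra.
    + exists (u*(1-be)), s, (t + u*be). repeat split; try nra.
      f_equal; nra.
  - intros [s [t [u [Hs [Ht [Hu [Hsum Hy]]]]]]]. injection Hy; intros E1 E2.
    destruct (Rle_lt_dec (u*(1-be)) (s*be)) as [Hc|Hc].
    + left. exists (s - (1-be)*u/be), t, (u/be).
      assert (0 <= u/be) by (unfold Rdiv; apply Rmult_le_pos; [lra| left; apply Rinv_0_lt_compat; lra]).
      assert ((1-be)*u/be <= s).
      { apply (Rmult_le_reg_r be); try lra. field_simplify; lra. }
      repeat split; try lra.
      * transitivity (s+t+u); [field; lra | exact Hsum].
      * f_equal; [rewrite E2 | rewrite E1]; field; lra.
    + right. exists t, (u - be*s/(1-be)), (s/(1-be)).
      assert (0 <= s/(1-be)) by (unfold Rdiv; apply Rmult_le_pos; [lra| left; apply Rinv_0_lt_compat; lra]).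
      assert (be*s/(1-be) <= u).
      { apply (Rmult_le_reg_r (1-be)); try lra. field_simplify; lra. }
      repeat split; try lra.
      * transitivity (s+t+u); [field; lra | exact Hsum].
      * f_equal; [rewrite E2 | rewrite E1]; field; lra.
Qed.

Theorem proposition2p4 (a b c m1 m2 : Z) (V0 Q : pt) (M : pt -> pt) :
  markov_triple a b c ->
  (0 < m1)%Z -> (0 < m2)%Z -> (a*a*m1 + b*b*m2 = c*c)%Z ->
  let l2 := ((m2 + 1) / a)%Z in
  let u1 := zpt (b*b) (- m1) in
  let u2 := zpt (- (a*a)) (- m2) in
  let w1 := zpt (- a) (- l2) in
  let V1 := padd V0 (pscale (IZR (a*a)) u1) in
  let V2 := padd V1 (pscale (IZR (b*b)) u2) in
  (* Q is the point where the line l = V2 + R w1 meets the edge [V0,V1] *)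
  (exists t : R, Q = padd V2 (pscale t w1)) ->
  segment V0 V1 Q ->
  (* M is the affine map fixing l pointwise with linear part v |-> v + det(w1,v) w1 *)
  (forall p q : pt, psub (M p) (M q) =
      padd (psub p q) (pscale (det2 w1 (psub p q)) w1)) ->
  (forall t : R, M (padd V2 (pscale t w1)) = padd V2 (pscale t w1)) ->
  let Delta' := fun x : pt =>
    conv3 V0 Q V2 x \/ exists y, conv3 Q V1 V2 y /\ x = M y in
  let a' := (3*b*c - a)%Z in
  exists (P0 P1 P2 : pt) (lam : R),
    0 < lam /\ noncollinear P0 P1 P2 /\
    (forall x, Delta' x <-> conv3 P0 P1 P2 x) /\
    has_affine_length (psub P1 P0) (lam * IZR (c*c)) /\
    has_affine_length (psub P2 P1) (lam * IZR (b*b)) /\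
    has_affine_length (psub P0 P2) (lam * IZR (a'*a')).

Proof.
  destruct V0 as [x0 y0].
  intros Hmk Hm1 Hm2 Hmm l2 u1 u2 w1 V1 V2 HQ Hseg HMa HMb Delta' a'.
  destruct (nt_facts a b c m1 m2 Hmk Hm1 Hm2 Hmm) as [El2 [K [HK [HK2 [Pr1 Pr2]]]]].
  fold l2 in El2. fold a' in HK.
  pose proof Hmk as [Ha [Hb [Hc Emk]]].
  assert (Eaa : (a*a' = b*b + c*c)%Z) by (unfold a'; lia).
  assert (Ha' : (0 < a')%Z) by nia.
  pose proof (M_formula w1 V2 M HMa HMb) as HM.
  destruct HQ as [t HQ2]. destruct Hseg as [sg [Hsg HQ1]].
  assert (DQ : det2 w1 (psub Q V2) = 0).
  { rewrite HQ2. destruct V2, w1. unfold det2, psub, padd, pscale; simpl. ring. }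
  assert (HMp := M_part w1 V2 Q V1 M HM DQ).
  Ltac zr H := apply (f_equal IZR) in H; repeat rewrite ?plus_IZR, ?minus_IZR, ?mult_IZR, ?opp_IZR in H.
  zr El2. zr HK. zr HK2. zr Eaa. zr Hmm.
  apply IZR_lt in Ha, Hb, Hc, Ha', Hm1, Hm2.
  assert (w1e : w1 = (- IZR a, - IZR l2)) by (unfold w1, zpt; rewrite !opp_IZR; reflexivity).
  assert (V1e : V1 = (x0 + IZR a * IZR a * (IZR b * IZR b), y0 - IZR a * IZR a * IZR m1)).
  { unfold V1, u1, zpt, padd, pscale; simpl. repeat rewrite ?mult_IZR, ?opp_IZR. f_equal; ring. }
  assert (V2e : V2 = (x0, y0 - IZR c * IZR c)).
  { unfold V2, V1, u1, u2, zpt, padd, pscale; simpl. repeat rewrite ?mult_IZR, ?opp_IZR.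
    f_equal; [ring | lra]. }
  clearbody u1 u2 w1 V1 V2 l2 a'. subst w1 V1 V2.
  set (A := IZR a) in *. set (B := IZR b) in *. set (C := IZR c) in *.
  set (A' := IZR a') in *. set (L2 := IZR l2) in *. set (M1 := IZR m1) in *.
  set (M2 := IZR m2) in *. set (KK := IZR K) in *.
  rewrite HQ1 in HQ2. unfold padd, psub, pscale in HQ2, HQ1; simpl in HQ2, HQ1.
  injection HQ2; intros Ey Ex.
  assert (Ht : t = - sg*A*(B*B)).
  { apply (Rmult_eq_reg_r A); [|lra]. nra. }
  subst t.
  assert (E1 : sg * (B*B) * (A*L2) = sg*(B*B)*(M2+1)) by (rewrite El2; ring).
  assert (E2 : sg*(A*A') = sg*(B*B+C*C)) by (rewrite Eaa; ring).
  assert (E3 : sg*(A*A*M1+B*B*M2) = sg*(C*C)) by (rewrite Hmm; ring).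
  assert (Hsig : sg*(A*A') = C*C) by nra.
  assert (Hs : sg = C*C/(A*A')) by (rewrite <- Hsig; field; repeat split; nra).
  assert (HD : det2 (- A, - L2) (psub (x0 + A * A * (B * B), y0 - A * A * M1) (x0, y0 - C * C)) = A*(B*B)).
  { unfold det2, psub; simpl.
    assert (E4 : A*(C*C - A*A*M1) = A*(B*B*M2)) by (rewrite <- Hmm; ring).
    assert (E5 : L2*(A*A*(B*B)) = A*(B*B)*(M2+1)) by (rewrite El2; ring).
    nra. }
  assert (HW : M (x0 + A * A * (B * B), y0 - A * A * M1) = (x0, y0 - A*A')).
  { rewrite HM, HD. unfold padd, pscale; simpl. f_equal; [ring|].
    assert (E5 : A*(B*B)*L2 = (B*B)*(M2+1)) by (rewrite El2; ring). nra. }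
  rewrite HW in HMp.
  assert (HQe : Q = (x0 + sg*(A*A*(B*B)), y0 - sg*(A*A*M1))) by (rewrite HQ1; f_equal; ring).
  clear HQ1. subst Q. subst sg.
  assert (HAA : 0 < A*A') by nra.
  exists (x0, y0), (x0 + C * C / (A * A') * (A * A * (B * B)), y0 - C * C / (A * A') * (A * A * M1)),
    (x0, y0 - A*A'), (A/A').
  split; [apply Rdiv_lt_0_compat; lra|].
  split.
  { unfold noncollinear, det2, psub; simpl.
    match goal with |- ?e <> 0 => replace e with (-(C*C*(A*A*(B*B)))) by (field; repeat split; nra) end.
    apply Rlt_not_eq.
    assert (0 < C*C*(A*A*(B*B))) by (repeat apply Rmult_lt_0_compat; lra). lra. }
  split.
  { intro x. unfold Delta'. rewrite HMp. apply (union_tri _ _ _ _ (C*C/(A*A'))).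
    - split. apply Rdiv_lt_0_compat; nra. apply (Rmult_lt_reg_r (A*A')); [lra|].
      field_simplify; nra.
    - unfold padd, pscale; simpl. f_equal; field; repeat split; nra. }
  split.
  { exists (b*b)%Z, (-m1)%Z. split; [exact Pr1|]. split.
    - rewrite mult_IZR. apply Rmult_le_pos; [left; apply Rdiv_lt_0_compat; lra| nra].
    - unfold psub, pscale, zpt; simpl. repeat rewrite ?mult_IZR, ?opp_IZR.
      fold B C M1. f_equal; field; repeat split; nra. }
  split.
  { exists (-(c*c))%Z, (-K)%Z. split; [exact Pr2|]. split.
    - rewrite mult_IZR. apply Rmult_le_pos; [left; apply Rdiv_lt_0_compat; lra| nra].
    - unfold psub, pscale, zpt; simpl. repeat rewrite ?mult_IZR, ?opp_IZR.
      fold B C KK. f_equal; [field; repeat split; nra|].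
      replace (A/A' * (B*B) * - KK) with (-(A/A')*(KK*(B*B))) by ring.
      rewrite <- HK. field; repeat split; nra. }
  { exists 0%Z, 1%Z. split; [exact prim01|]. split.
    - rewrite mult_IZR. apply Rmult_le_pos; [left; apply Rdiv_lt_0_compat; lra| nra].
    - unfold psub, pscale, zpt; simpl. rewrite mult_IZR. fold A'.
      f_equal; field; repeat split; nra. }
Qed.
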